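(* Let $\mathcal W$ be a discrete memoryless channel from finite $\mathcal X$ to finite $\mathcal Y$. Then: (1) $U(\mathcal W)\ge0$, with equality if and only if $\mathcal W(\cdot|x)$ does not depend on $x\in\mathcal X$. (2) $U(\mathcal W)<\infty$ if and only if there exists $y\in\mathcal Y$ with $\mathcal W(y|x)>0$ for all $x\in\mathcal X$. (3) The map $\mathcal W\mapsto U(\mathcal W)$ is convex on the set of channels from $\mathcal X$ to $\mathcal Y$.
   Context: $D(P\|Q)=\sum P\log(P/Q)$ ($0\log(0/q)=0$; $+\infty$ if $P\not\ll Q$). $U(\mathcal W)=\max_{P_X\in\mathcal P(\mathcal X)}\min_{Q_Y\in\mathcal P(\mathcal Y)}D(P_X\times Q_Y\|P_{XY})$, $P_{XY}(x,y)=P_X(x)\mathcal W(y|x)$. *)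

(* Defs.v *)
From HB Require Import structures.
From mathcomp Require Import all_boot all_order all_algebra.
From mathcomp Require Import all_classical all_reals all_analysis.
Set Implicit Arguments. Unset Strict Implicit. Unset Printing Implicit Defensive.
Import Order.TTheory GRing.Theory Num.Theory.
Local Open Scope classical_set_scope.
Local Open Scope ring_scope.

Definition is_dist (R : realType) (T : finType) (p : T -> R) : Prop :=
  (forall t, 0 <= p t) /\ \sum_(t : T) p t = 1.

(* A discrete memoryless channel W(y|x) = W x y. *)
Definition is_channel (R : realType) (X Y : finType) (W : X -> Y -> R) : Prop :=
  forall x, is_dist (W x).

Definition KL (R : realType) (T : finType) (P Q : T -> R) : \bar R :=
  (\sum_(t : T)
     (if P t == (0%R : R) then 0%E
      else if Q t == (0%R : R) then +oo%E
      else (P t * ln (P t / Q t))%R%:E))%E.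

Definition prod_dist (R : realType) (X Y : finType) (P : X -> R) (Q : Y -> R)
  : X * Y -> R := fun xy => P xy.1 * Q xy.2.
Definition joint_dist (R : realType) (X Y : finType) (P : X -> R) (W : X -> Y -> R)
  : X * Y -> R := fun xy => P xy.1 * W xy.1 xy.2.

(* U(W) = max_{P_X} min_{Q_Y} D(P_X x Q_Y || P_XY), max/min taken as sup/inf
   in the extended reals. *)
Definition Ufun (R : realType) (X Y : finType) (W : X -> Y -> R) : \bar R :=
  ereal_sup [set ereal_inf [set KL (prod_dist P Q) (joint_dist P W)
                             | Q in [set Q : Y -> R | is_dist Q]]
            | P in [set P : X -> R | is_dist P]].

(* Main.v *)
Require Import Defs.
From HB Require Import structures.
From mathcomp Require Import all_boot all_order all_algebra.
From mathcomp Require Import all_classical all_reals all_analysis.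
From mathcomp Require Import ring lra.
Import Order.TTheory GRing.Theory Num.Theory.
Set Implicit Arguments. Unset Strict Implicit. Unset Printing Implicit Defensive.
Local Open Scope ring_scope.

Section S.
Variable R : realType.

Definition phi (a b : R) : \bar R :=
  if a == 0 then 0%E else if b == 0 then +oo%E else (a * ln (a / b))%:E.

Lemma ln_le1 (x : R) : 0 < x -> ln x <= x - 1.
Proof.
move=> x0; have := @le_ln1Dx R (x - 1); rewrite [1 + _]addrC subrK; apply.
lra.
Qed.

Lemma phi_lb (a b : R) : 0 <= a -> 0 <= b ->
  (((Num.sqrt a - Num.sqrt b) ^+ 2 + a - b)%:E <= phi a b)%E.
Proof.
move=> a0 b0; rewrite /phi.
have [->|an0] := eqVneq a 0.
  by rewrite lee_fin sqrtr0 sub0r sqrrN sqr_sqrtr // addr0 subrr.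
have [->|bn0] := eqVneq b 0; first by rewrite leey.
rewrite lee_fin.
have ap : 0 < a by rewrite lt_neqAle eq_sym an0 a0.
have bp : 0 < b by rewrite lt_neqAle eq_sym bn0 b0.
have xp : 0 < Num.sqrt a by rewrite sqrtr_gt0.
have yp : 0 < Num.sqrt b by rewrite sqrtr_gt0.
have ea : a = (Num.sqrt a) ^+ 2 by rewrite sqr_sqrtr.
have eb : b = (Num.sqrt b) ^+ 2 by rewrite sqr_sqrtr.
move: (Num.sqrt a) (Num.sqrt b) xp yp ea eb => x y xp yp -> ->.
rewrite -expr_div_n lnXn ?divr_gt0 //.
have h : ln (y / x) <= y / x - 1 by apply: ln_le1; rewrite divr_gt0.
have e1 : ln (y / x) = - ln (x / y) by rewrite -lnV ?invf_div // posrE divr_gt0.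
have h2 : x ^+ 2 * (- ln (x / y)) <= x ^+ 2 * (y / x - 1).
  by rewrite -e1 ler_wpM2l // ?exprn_ge0 ?ltW.
have e2 : x ^+ 2 * (y / x - 1) = x * y - x ^+ 2.
  by field; rewrite gt_eqF.
rewrite e2 in h2.
rewrite mulr2n; nra.
Qed.

Lemma phi_nNy (a b : R) : phi a b != -oo%E.
Proof. by rewrite /phi; case: ifP => //; case: ifP. Qed.

Lemma phi_scale (t a b : R) : 0 < t -> phi (t * a) (t * b) = (t%:E * phi a b)%E.
Proof.
move=> t0; rewrite /phi !mulf_eq0 (gt_eqF t0) /=.
case: ifP => _; first by rewrite mule0.
case: ifP => _; first by rewrite gt0_muley ?lte_fin.
rewrite -EFinM; congr (_%:E).
by rewrite -!mulf_div divff ?gt_eqF // mul1r mulrA.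
Qed.

Lemma phi_subadd (a1 a2 b1 b2 : R) : 0 <= a1 -> 0 <= a2 -> 0 <= b1 -> 0 <= b2 ->
  (phi (a1 + a2) (b1 + b2) <= phi a1 b1 + phi a2 b2)%E.
Proof.
move=> a10 a20 b10 b20.
have [->|a1n] := eqVneq a1 0.
  rewrite add0r {2}/phi eqxx add0e /phi.
  have [//|a2n] := eqVneq a2 0.
  have [->|b2n] := eqVneq b2 0; first by rewrite leey.
  have a2p : 0 < a2 by rewrite lt_neqAle eq_sym a2n.
  have b2p : 0 < b2 by rewrite lt_neqAle eq_sym b2n.
  rewrite gt_eqF ?ltr_wpDl // lee_fin; apply: ler_wpM2l; first exact: ltW.
  rewrite ler_ln ?posrE ?divr_gt0 ?ltr_wpDl //.
  by rewrite ler_pM2l // lef_pV2 ?posrE ?ltr_wpDl // lerDr.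
have [->|a2n] := eqVneq a2 0.
  rewrite addr0 [phi 0 _]/phi eqxx adde0 /phi (negbTE a1n).
  have [->|b1n] := eqVneq b1 0; first by rewrite leey.
  have a1p : 0 < a1 by rewrite lt_neqAle eq_sym a1n.
  have b1p : 0 < b1 by rewrite lt_neqAle eq_sym b1n.
  rewrite gt_eqF ?ltr_wpDr // lee_fin; apply: ler_wpM2l; first exact: ltW.
  rewrite ler_ln ?posrE ?divr_gt0 ?ltr_wpDr //.
  by rewrite ler_pM2l // lef_pV2 ?posrE ?ltr_wpDr // lerDl.
have a1p : 0 < a1 by rewrite lt_neqAle eq_sym a1n.
have a2p : 0 < a2 by rewrite lt_neqAle eq_sym a2n.
have [->|b1n] := eqVneq b1 0.
  by rewrite {2}/phi (negbTE a1n) eqxx addye ?phi_nNy // leey.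
have [->|b2n] := eqVneq b2 0.
  by rewrite {3}/phi (negbTE a2n) eqxx addey ?phi_nNy // leey.
have b1p : 0 < b1 by rewrite lt_neqAle eq_sym b1n.
have b2p : 0 < b2 by rewrite lt_neqAle eq_sym b2n.
rewrite /phi (negbTE a1n) (negbTE a2n) (negbTE b1n) (negbTE b2n).
rewrite !gt_eqF ?addr_gt0 // -EFinD lee_fin.
set A := a1 + a2; set B := b1 + b2.
have Ap : 0 < A by rewrite addr_gt0.
have Bp : 0 < B by rewrite addr_gt0.
have lnd x y : 0 < x -> 0 < y -> ln (x / y) = ln x - ln y.
  by move=> x0 y0; rewrite lnM ?posrE ?invr_gt0 // lnV ?posrE.
have key x y : 0 < x -> 0 < y ->
    x * (ln y + ln A - ln x - ln B) <= y * A / B - x.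
  move=> x0 y0.
  have h := ln_le1 (_ : 0 < (y * A) / (x * B)).
  have p : 0 < (y * A) / (x * B) by rewrite divr_gt0 ?mulr_gt0.
  move: (h p); rewrite lnd ?mulr_gt0 // !lnM ?posrE // => h2.
  have := ler_wpM2l (ltW x0) h2.
  have -> : x * (y * A / (x * B) - 1) = y * A / B - x.
    by field; rewrite !gt_eqF.
  by have -> : ln y + ln A - (ln x + ln B) = ln y + ln A - ln x - ln B by ring.
have k1 := key _ _ a1p b1p.
have k2 := key _ _ a2p b2p.
have e : b1 * A / B + b2 * A / B = A by rewrite /B; field; rewrite gt_eqF.
rewrite !lnd //.
have eA : A = a1 + a2 by [].
rewrite [in X in X * _]eA.
nra.
Qed.

Variables X Y : finType.

Definition G (P : X -> R) (Q : Y -> R) (W : X -> Y -> R) : \bar R :=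
  KL (prod_dist P Q) (joint_dist P W).
Definition H (P : X -> R) (W : X -> Y -> R) : \bar R :=
  ereal_inf [set G P Q W | Q in [set Q : Y -> R | is_dist Q]].

Lemma UfunE (W : X -> Y -> R) : Ufun W = ereal_sup [set H P W | P in [set P : X -> R | is_dist P]].
Proof. by []. Qed.

Lemma sum_prod (P : X -> R) (Q : Y -> R) : is_dist P -> is_dist Q -> \sum_(xy : X * Y) prod_dist P Q xy = 1.
Proof.
move=> [_ P1] [_ Q1]; rewrite -(pair_big xpredT xpredT (fun x y => P x * Q y)) /=.
under eq_bigr do rewrite -mulr_sumr Q1 mulr1.
exact: P1.
Qed.

Lemma sum_joint (P : X -> R) (W : X -> Y -> R) : is_dist P -> is_channel W ->
  \sum_(xy : X * Y) joint_dist P W xy = 1.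
Proof.
move=> [_ P1] HW; rewrite -(pair_big xpredT xpredT (fun x y => P x * W x y)) /=.
under eq_bigr => x _ do rewrite -mulr_sumr (proj2 (HW x)) mulr1.
exact: P1.
Qed.

Definition sqd (P : X -> R) (Q : Y -> R) (W : X -> Y -> R) (xy : X * Y) : R :=
  (Num.sqrt (P xy.1 * Q xy.2) - Num.sqrt (P xy.1 * W xy.1 xy.2)) ^+ 2.

Lemma G_lb (P : X -> R) (Q : Y -> R) (W : X -> Y -> R) : is_dist P -> is_dist Q -> is_channel W ->
  ((\sum_xy sqd P Q W xy)%:E <= G P Q W)%E.
Proof.
move=> HP HQ HW.
have -> : \sum_xy sqd P Q W xy =
   \sum_xy (sqd P Q W xy + prod_dist P Q xy - joint_dist P W xy).
  by rewrite sumrB big_split /= sum_prod // sum_joint // addrK.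
rewrite /G /KL -sumEFin; apply: lee_sum => -[x y] _ /=.
apply: phi_lb; rewrite /prod_dist /joint_dist /=.
  by apply: mulr_ge0; [apply HP.1|apply HQ.1].
by apply: mulr_ge0; [apply HP.1|apply (HW x).1].
Qed.

Lemma G_ge0 (P : X -> R) (Q : Y -> R) (W : X -> Y -> R) : is_dist P -> is_dist Q -> is_channel W -> (0 <= G P Q W)%E.
Proof.
move=> HP HQ HW; apply: le_trans (G_lb HP HQ HW).
by rewrite lee_fin; apply: sumr_ge0 => i _; apply: sqr_ge0.
Qed.

Lemma H_ge0 (P : X -> R) (W : X -> Y -> R) : is_dist P -> is_channel W -> (0 <= H P W)%E.
Proof.
move=> HP HW; apply: le_ereal_inf_tmp => _ [Q HQ <-]; exact: G_ge0.
Qed.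

Lemma H_le (P : X -> R) (Q : Y -> R) (W : X -> Y -> R) : is_dist Q -> (H P W <= G P Q W)%E.
Proof. by move=> HQ; apply: ereal_inf_lbound; exists Q. Qed.

Lemma H_le_U (P : X -> R) (W : X -> Y -> R) : is_dist P -> (H P W <= Ufun W)%E.
Proof. by move=> HP; rewrite UfunE; apply: ereal_sup_ubound; exists P. Qed.

Lemma dist_le1 (T : finType) (p : T -> R) t : is_dist p -> p t <= 1.
Proof.
move=> [p0 p1]; rewrite -p1 (bigD1 t) //= lerDl; exact: sumr_ge0.
Qed.


Lemma KLE (T : finType) (p q : T -> R) : KL p q = (\sum_(i : T) phi (p i) (q i))%E.
Proof. by []. Qed.

Lemma sum_nNy (I : Type) (s : seq I) (F : I -> \bar R) :
  (forall i, F i != -oo%E) -> (\sum_(i <- s) F i)%E != -oo%E.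
Proof.
move=> hF; elim: s => [|i s IH]; first by rewrite big_nil.
by rewrite big_cons; move: (F i) (\sum_(j <- s) F j)%E (hF i) IH => [a| |] [b| |].
Qed.

Lemma sum_nNyP (I : Type) (s : seq I) (p : pred I) (F : I -> \bar R) :
  (forall i, F i != -oo%E) -> (\sum_(i <- s | p i) F i)%E != -oo%E.
Proof.
move=> hF; rewrite -big_filter; exact: sum_nNy.
Qed.

Lemma sume_distr (I : Type) (s : seq I) (t : R) (F : I -> \bar R) :
  (forall i, F i != -oo%E) ->
  (t%:E * \sum_(i <- s) F i = \sum_(i <- s) t%:E * F i)%E.
Proof.
move=> hF; elim: s => [|i s IH]; first by rewrite !big_nil mule0.
rewrite !big_cons -IH muleDr //.
have := sum_nNy s hF; move: (F i) (\sum_(j <- s) F j)%E (hF i) => [a| |] [b| |] //.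
Qed.

Lemma mix_dist (T : finType) (t s : R) (p q : T -> R) : 0 <= t -> 0 <= s -> t + s = 1 ->
  is_dist p -> is_dist q -> is_dist (fun i => t * p i + s * q i).
Proof.
move=> t0 s0 ts [p0 p1] [q0 q1]; split.
  by move=> i; apply: addr_ge0; apply: mulr_ge0.
by rewrite big_split /= -!mulr_sumr p1 q1 !mulr1.
Qed.

Lemma G_convex (P : X -> R) (Q1 Q2 : Y -> R) (W1 W2 : X -> Y -> R) (t s : R) :
  0 < t -> 0 < s -> is_dist P -> is_dist Q1 -> is_dist Q2 ->
  is_channel W1 -> is_channel W2 ->
  (G P (fun y => t * Q1 y + s * Q2 y)%R (fun x y => t * W1 x y + s * W2 x y)%R
   <= t%:E * G P Q1 W1 + s%:E * G P Q2 W2)%E.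
Proof.
move=> t0 s0 HP HQ1 HQ2 HW1 HW2.
rewrite /G !KLE !sume_distr; try by move=> i; apply: phi_nNy.
rewrite -big_split /=.
apply: lee_sum => -[x y] _; rewrite /prod_dist /joint_dist /=.
have -> : P x * (t * Q1 y + s * Q2 y) = t * (P x * Q1 y) + s * (P x * Q2 y) by ring.
have -> : P x * (t * W1 x y + s * W2 x y) = t * (P x * W1 x y) + s * (P x * W2 x y) by ring.
have Px := HP.1 x.
have h1 : 0 <= t * (P x * Q1 y).
  by apply: mulr_ge0; [exact: ltW|apply: mulr_ge0 => //; apply HQ1.1].
have h2 : 0 <= s * (P x * Q2 y).
  by apply: mulr_ge0; [exact: ltW|apply: mulr_ge0 => //; apply HQ2.1].
have h3 : 0 <= t * (P x * W1 x y).
  by apply: mulr_ge0; [exact: ltW|apply: mulr_ge0 => //; apply (HW1 x).1].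
have h4 : 0 <= s * (P x * W2 x y).
  by apply: mulr_ge0; [exact: ltW|apply: mulr_ge0 => //; apply (HW2 x).1].
apply: le_trans (phi_subadd h1 h2 h3 h4) _.
by rewrite (phi_scale _ _ t0) (phi_scale _ _ s0).
Qed.

Lemma inf_mix (A : \bar R) (S1 S2 : set (\bar R)) (t s : R) :
  0 < t -> 0 < s -> t + s = 1 ->
  (forall e, S1 e -> (0 <= e)%E) -> (forall e, S2 e -> (0 <= e)%E) ->
  (forall e1 e2, S1 e1 -> S2 e2 -> (A <= t%:E * e1 + s%:E * e2)%E) ->
  (A <= t%:E * ereal_inf S1 + s%:E * ereal_inf S2)%E.
Proof.
move=> t0 s0 ts hS1 hS2 hA.
have i1 : (0 <= ereal_inf S1)%E by apply: le_ereal_inf_tmp.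
have i2 : (0 <= ereal_inf S2)%E by apply: le_ereal_inf_tmp.
have m1 : (0 <= t%:E * ereal_inf S1)%E by apply: mule_ge0 => //; rewrite lee_fin ltW.
have m2 : (0 <= s%:E * ereal_inf S2)%E by apply: mule_ge0 => //; rewrite lee_fin ltW.
case E1: (ereal_inf S1) i1 m1 => [r1| |] // i1 m1; last first.
  rewrite gt0_muley ?lte_fin // addye ?leey //.
  by apply: contraTN m2 => /eqP ->.
case E2: (ereal_inf S2) i2 m2 => [r2| |] // i2 m2; last first.
  rewrite gt0_muley ?lte_fin // addey ?leey //.
apply/lee_addgt0Pr => e e0.
have [e1 S1e1 lt1] : exists2 y, S1 y & (y < (r1 + e)%:E)%E.
  by apply: ereal_inf_lt; rewrite E1 lte_fin ltrDl.
have [e2 S2e2 lt2] : exists2 y, S2 y & (y < (r2 + e)%:E)%E.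
  by apply: ereal_inf_lt; rewrite E2 lte_fin ltrDl.
apply: le_trans (hA _ _ S1e1 S2e2) _.
have k1 : (t%:E * e1 <= t%:E * (r1 + e)%:E)%E.
  by apply: lee_wpmul2l; [rewrite lee_fin ltW | exact: ltW].
have k2 : (s%:E * e2 <= s%:E * (r2 + e)%:E)%E.
  by apply: lee_wpmul2l; [rewrite lee_fin ltW | exact: ltW].
apply: le_trans (leeD k1 k2) _.
rewrite -!EFinM -!EFinD lee_fin.
have -> : t * (r1 + e) + s * (r2 + e) = t * r1 + s * r2 + (t + s) * e by ring.
by rewrite ts mul1r.
Qed.


Lemma H_convex (P : X -> R) (W1 W2 : X -> Y -> R) (t s : R) :
  0 < t -> 0 < s -> t + s = 1 -> is_dist P -> is_channel W1 -> is_channel W2 ->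
  (H P (fun x y => t * W1 x y + s * W2 x y)%R <= t%:E * H P W1 + s%:E * H P W2)%E.
Proof.
move=> t0 s0 ts HP HW1 HW2; apply: inf_mix => //.
- by move=> _ [Q HQ <-]; exact: G_ge0.
- by move=> _ [Q HQ <-]; exact: G_ge0.
move=> _ _ [Q1 HQ1 <-] [Q2 HQ2 <-].
apply: le_trans (H_le _ _ (mix_dist (ltW t0) (ltW s0) ts HQ1 HQ2)) _.
exact: G_convex.
Qed.

Lemma U_convex (W1 W2 : X -> Y -> R) (t s : R) :
  0 < t -> 0 < s -> t + s = 1 -> is_channel W1 -> is_channel W2 ->
  (Ufun (fun x y => t * W1 x y + s * W2 x y)%R <= t%:E * Ufun W1 + s%:E * Ufun W2)%E.
Proof.
move=> t0 s0 ts HW1 HW2; rewrite [X in (X <= _)%E]UfunE.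
apply: ge_ereal_sup => _ [P HP <-].
apply: le_trans (H_convex t0 s0 ts HP HW1 HW2) _.
apply: leeD; apply: lee_wpmul2l; rewrite ?lee_fin.
- exact: ltW.
- exact: H_le_U.
- exact: ltW.
- exact: H_le_U.
Qed.

Definition unif : X -> R := fun _ => (#|X|%:R)^-1.

Lemma unif_dist : (0 < #|X|)%N -> is_dist unif.
Proof.
move=> HX; split; first by move=> i; rewrite /unif invr_ge0 ler0n.
rewrite /unif sumr_const -[_ *+ #|_|]mulr_natr mulVf // pnatr_eq0 -lt0n.
exact: HX.
Qed.


Lemma U_ge0 (W : X -> Y -> R) : (0 < #|X|)%N -> is_channel W -> (0 <= Ufun W)%E.
Proof.
move=> HX HW; have HP := unif_dist HX.
exact: le_trans (H_ge0 HP HW) (H_le_U W HP).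
Qed.

Lemma sqd_unif (Q : Y -> R) (W : X -> Y -> R) x y : 0 <= Q y -> 0 <= W x y ->
  sqd unif Q W (x, y) = (#|X|%:R)^-1 * (Num.sqrt (Q y) - Num.sqrt (W x y)) ^+ 2.
Proof.
move=> Q0 W0; rewrite /sqd /unif /= !sqrtrM ?invr_ge0 ?ler0n //.
rewrite -mulrBr exprMn sqr_sqrtr // invr_ge0 ler0n.
Qed.

Lemma U0_const (W : X -> Y -> R) : (0 < #|X|)%N -> is_channel W -> Ufun W = 0%E ->
  forall x x' y, W x y = W x' y.
Proof.
move=> HX HW U0 x x' y; apply/eqP; apply: contraT => neq.
have xx : x != x' by apply: contraNneq neq => ->.
have HP := unif_dist HX.
set u := (#|X|%:R : R)^-1.
have up : 0 < u by rewrite /u invr_gt0 ltr0n.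
set a := Num.sqrt (W x y); set b := Num.sqrt (W x' y).
have ab : a != b.
  apply: contraNneq neq => eab.
  by rewrite -(sqr_sqrtr ((HW x).1 y)) -(sqr_sqrtr ((HW x').1 y)) -/a -/b eab.
have abp : 0 < (a - b) ^+ 2 by rewrite exprn_even_gt0 //= subr_eq0.
set c := u * ((a - b) ^+ 2 / 2).
have cp : 0 < c by rewrite /c mulr_gt0 // divr_gt0.
have : (c%:E <= H unif W)%E.
  apply: le_ereal_inf_tmp => _ [Q HQ <-]; apply: le_trans (G_lb HP HQ HW).
  rewrite lee_fin (bigD1 (x, y)) //= (bigD1 (x', y)) /=; first last.
    by rewrite xpair_eqE eqxx andbT eq_sym.
  have r0 : 0 <= \sum_(i | (i != (x, y)) && (i != (x', y))) sqd unif Q W i.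
    by apply: sumr_ge0 => i _; apply: sqr_ge0.
  rewrite !sqd_unif; try apply: HQ.1; try apply: (HW _).1.
  rewrite -/a -/b.
  set q := Num.sqrt (Q y).
  have id : (q - a) ^+ 2 + (q - b) ^+ 2 = (a - b) ^+ 2 / 2 + (2 * q - a - b) ^+ 2 / 2.
    by field.
  have : u * ((a - b) ^+ 2 / 2) <= u * ((q - a) ^+ 2 + (q - b) ^+ 2).
    apply: ler_wpM2l; first exact: ltW.
    by rewrite id lerDl divr_ge0 ?sqr_ge0.
  rewrite /c -/u mulrDr => h; lra.
move=> h; have := le_trans h (H_le_U W HP); rewrite U0 lee_fin => h2.
by move: cp; rewrite ltNge h2.
Qed.

Lemma phi_diag (a : R) : phi a a = 0%E.
Proof.
rewrite /phi; case: ifP => // /negbT a0; rewrite (negbTE a0) divff // ln1 mulr0 //.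
Qed.

Lemma const_U0 (W : X -> Y -> R) : (0 < #|X|)%N -> is_channel W ->
  (forall x x' y, W x y = W x' y) -> Ufun W = 0%E.
Proof.
move=> HX HW hc; apply/eqP; rewrite eq_le U_ge0 // andbT.
have [x0 _] : exists x0 : X, x0 \in X by apply/card_gt0P.
rewrite UfunE; apply: ge_ereal_sup => _ [P HP <-].
apply: le_trans (H_le P W (HW x0)) _.
rewrite /G KLE big1 // => -[x y] _; rewrite /prod_dist /joint_dist /= (hc x0 x).
exact: phi_diag.
Qed.


Lemma U_fin (W : X -> Y -> R) y : is_channel W -> (forall x, 0 < W x y) ->
  (Ufun W < +oo)%E.
Proof.
move=> HW Wy.
set M := \sum_(xy : X * Y) `|ln (W xy.1 y)|.
apply: (@le_lt_trans _ _ M%:E); last by rewrite ltry.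
rewrite UfunE; apply: ge_ereal_sup => _ [P HP <-].
pose d : Y -> R := fun y' => if y' == y then 1 else 0.
have Hd : is_dist d.
  split; first by move=> y'; rewrite /d; case: ifP.
  rewrite (bigD1 y) //= /d eqxx big1 ?addr0 // => y' /negbTE -> //.
apply: le_trans (H_le P W Hd) _.
rewrite /G KLE /M -sumEFin; apply: lee_sum => -[x y'] _.
rewrite /prod_dist /joint_dist /d /=.
case: eqP => [->|_]; last by rewrite mulr0 /phi eqxx lee_fin.
rewrite mulr1 /phi; case: ifP => [_|/negbT P0]; first by rewrite lee_fin.
have Pp : 0 < P x by rewrite lt_neqAle eq_sym P0 (HP.1 x).
rewrite gt_eqF ?mulr_gt0 // invfM mulrA divff // mul1r lnV ?posrE // lee_fin.
have h1 : - ln (W x y) <= `|ln (W x y)| by rewrite ler_normr lexx orbT.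
have h2 : P x <= 1 := dist_le1 x HP.
have h3 : 0 <= `|ln (W x y)| by [].
nra.
Qed.

Lemma U_fin_inv (W : X -> Y -> R) : (0 < #|X|)%N -> is_channel W ->
  (Ufun W < +oo)%E -> exists y, forall x, 0 < W x y.
Proof.
move=> HX HW Ufin; apply: contrapT => hno.
have HP := unif_dist HX.
have : (+oo <= H unif W)%E.
  apply: le_ereal_inf_tmp => _ [Q [Q0 Q1] <-].
  have [y Qy] : exists y, Q y != 0.
    case: (boolP [exists y, Q y != 0]) => [/existsP //|/existsPn Hn].
    move: Q1; rewrite big1 => [/eqP|y _]; first by rewrite eq_sym oner_eq0.
    by move: (Hn y); rewrite negbK => /eqP.
  have [x Wx] : exists x, W x y = 0.
    case: (boolP [forall x, 0 < W x y]) => [/forallP h|/forallPn [x hx]].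
      by case: hno; exists y.
    exists x; apply/eqP; rewrite eq_le (HW x).1 andbT.
    by rewrite leNgt.
  rewrite /G KLE (bigD1 (x, y)) //= {1}/phi /prod_dist /joint_dist /= Wx mulr0 eqxx.
  have up : 0 < unif x by rewrite /unif invr_gt0 ltr0n.
  rewrite mulf_eq0 (gt_eqF up) (negbTE Qy) /= addye //.
  by apply: sum_nNyP => i; apply: phi_nNy.
rewrite leye_eq => /eqP Hoo.
have := H_le_U W HP; rewrite Hoo leye_eq => /eqP Uoo.
by move: Ufin; rewrite Uoo ltxx.
Qed.

End S.

Unset Implicit Arguments.

Theorem mainTheorem18 (R : realType) (X Y : finType) (HX : (0 < #|X|)%N) :
  (forall W : X -> Y -> R, is_channel W ->
     (0 <= Ufun W)%E /\
     (Ufun W = 0%E <-> forall (x x' : X) (y : Y), W x y = W x' y)) /\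
  (forall W : X -> Y -> R, is_channel W ->
     ((Ufun W < +oo)%E <-> exists y : Y, forall x : X, 0 < W x y)) /\
  (forall (W1 W2 : X -> Y -> R) (t : R), is_channel W1 -> is_channel W2 ->
     0 <= t <= 1 ->
     (Ufun (fun x y => (t * W1 x y + (1 - t) * W2 x y)%R)
        <= t%:E * Ufun W1 + (1 - t)%R%:E * Ufun W2)%E).
Proof.
split; [|split].
- move=> W HW; split; first exact: U_ge0.
  split; [exact: U0_const | exact: const_U0].
- move=> W HW; split; first exact: U_fin_inv.
  by case=> y Hy; apply: (U_fin HW Hy).
move=> W1 W2 t HW1 HW2 /andP [t0 t1].
have [->|tn0] := eqVneq t 0.
  have -> : (fun x y => (0 * W1 x y + (1 - 0) * W2 x y)%R) = W2.
    by apply/funext => x; apply/funext => y; rewrite mul0r add0r subr0 mul1r.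
  by rewrite mul0e add0e subr0 mul1e.
have [->|tn1] := eqVneq t 1.
  have -> : (fun x y => (1 * W1 x y + (1 - 1) * W2 x y)%R) = W1.
    by apply/funext => x; apply/funext => y; rewrite subrr mul0r addr0 mul1r.
  by rewrite subrr mul0e adde0 mul1e.
apply: U_convex => //.
- by rewrite lt_neqAle eq_sym tn0.
- by rewrite subr_gt0 lt_neqAle tn1.
- by rewrite addrC subrK.
Qed.
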